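(* For every positive integer $n$, the number of circular permutations of $[n]=\{1,2,\ldots,n\}$ that avoid the pattern $1324$ equals the Fibonacci number $F_{2n-3}$.
   Context: A circular permutation of $[n]$ is an arrangement of $1,2,\ldots,n$ clockwise around a circle, two arrangements being identified if they differ by a rotation. Equivalently, it can be represented uniquely as a linear permutation $\pi_1\pi_2\cdots\pi_n$ of $[n]$ with $\pi_n=n$, whose rotations $\pi_i\pi_{i+1}\cdots\pi_n\pi_1\cdots\pi_{i-1}$ all represent the same circular permutation. The reduced form of a sequence of distinct positive integers is obtained by replacing its smallest entry by $1$, its next smallest by $2$, and so on; a pattern is such a reduced form. An occurrence of a pattern $\tau$ of length $m$ in a circular permutation $\pi$ is a sequence of $m$ letters of $\pi$ read in clockwise order and lying within one revolution (i.e., a subsequence of some rotation of the linear representation) whose reduced form is $\tau$; $\pi$ avoids $\tau$ if it has no occurrence of $\tau$. Fibonacci numbers: $F_1=F_2=1$, $F_{m+1}=F_m+F_{m-1}$, extended to negative index by the same recurrence, so $F_{-1}=1$. *)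

(* Defs.v *)
From mathcomp Require Import all_boot all_order all_algebra.
Set Implicit Arguments. Unset Strict Implicit. Unset Printing Implicit Defensive.

Fixpoint fib (m : nat) : nat :=
  match m with
  | 0 => 0
  | 1 => 1
  | (m'.+1 as k).+1 => fib k + fib m'
  end.

(* Extension to integer indices by the same recurrence:
   F_{-k} = (-1)^(k+1) F_k.  Negz m stands for -(m+1). *)
Definition fibz (z : int) : int :=
  match z with
  | Posz m => (fib m)%:Z
  | Negz m => ((-1) ^+ m * (fib m.+1)%:Z)%R
  end.

Definition reduce (s : seq nat) : seq nat :=
  [seq count (fun y => y <= x) s | x <- s].

(* Linear representations of circular permutations of [n]:
   permutations pi_1 ... pi_n of 1..n with pi_n = n. *)
Definition circ_perms (n : nat) : seq (seq nat) :=
  [seq s <- permutations (iota 1 n) | last 0 s == n].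

Definition circ_contains (tau pi : seq nat) : bool :=
  [exists i : 'I_(size pi), exists m : (size pi).-tuple bool,
      reduce (mask m (rot i pi)) == tau].

Definition circ_avoids (tau pi : seq nat) : bool := ~~ circ_contains tau pi.

(* Main.v *)
Require Import Defs.
From mathcomp Require Import all_boot all_order all_algebra zify.

Lemma subseq_catP (t s1 s2 : seq nat) : subseq t (s1 ++ s2) ->
  exists t1 t2, [/\ t = t1 ++ t2, subseq t1 s1 & subseq t2 s2].
Proof.
move/subseqP=> [m sz ->].
exists (mask (take (size s1) m) s1), (mask (drop (size s1) m) s2).
split; try exact: mask_subseq.
rewrite -mask_cat ?cat_take_drop // size_take sz size_cat.
by case: ltnP => // h; apply/eqP; rewrite eqn_leq leq_addr andbT -ltnS.
Qed.

Lemma subseq_split (u v s : seq nat) : subseq (u ++ v) s ->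
  exists s1 s2, [/\ s = s1 ++ s2, subseq u s1 & subseq v s2].
Proof.
elim: s u => [|x s IH] u; case: u => [|a u] /=.
- by move=> h; exists [::], [::]; split.
- by [].
- by move=> h; exists [::], (x :: s); split.
- case: eqP => [-> | _] h.
  + have [s1 [s2 [-> h1 h2]]] := IH u h.
    by exists (x :: s1), s2; rewrite /= eqxx.
  + have [s1 [s2 [-> h1 h2]]] := IH (a :: u) h.
    exists (x :: s1), s2; split => //=.
    by case: ifP => _ //; apply: cons_subseq h1.
Qed.

Lemma sub_single (t : seq nat) N : subseq t [:: N] -> t = [::] \/ t = [:: N].
Proof.
case: t => [|a [|b t]] /=; first by left.
- by case: (a =P N) => [->|] //=; right.
- by case: (a =P N) => //=; case: (b =P N).
Qed.

Lemma sub_rcons (t x : seq nat) N : subseq t (rcons x N) ->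
  subseq t x \/ exists u, t = rcons u N /\ subseq u x.
Proof.
rewrite -cats1 => /subseq_catP [t1 [t2 [-> h1 /sub_single [] ->]]].
- by left; rewrite cats0.
- by right; exists t1; rewrite cats1.
Qed.

Lemma sub_rcons_lt (s x : seq nat) N : subseq s (rcons x N) -> last 0 s != N -> subseq s x.
Proof.
move/sub_rcons => [//|[u [-> _]]]; by rewrite last_rcons eqxx.
Qed.

Lemma sub_rcons_lt' (s x : seq nat) N : subseq s (rcons x N) -> last 0 s < N -> subseq s x.
Proof.
by move=> h1 h2; apply: (@sub_rcons_lt _ _ _ h1); rewrite neq_ltn h2.
Qed.

Lemma reduce1324 t : reduce t = [:: 1;3;2;4] ->
  exists a b c d, t = [:: a; b; c; d] /\ [/\ a < c, c < b & b < d].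
Proof.
case: t => [|a [|b [|c [|d [|e t]]]]] //= [].
move=> h1 h2 h3 h4; exists a, b, c, d; split=> //.
move: h1 h2 h3 h4; rewrite !leqnn.
case: (leqP b a); case: (leqP c a); case: (leqP d a) => //=;
 rewrite ?add0n ?addn0 => h1 h2 h3 _.
rewrite (ltnW h1) (ltnW h2) (ltnW h3) /=.
case: (leqP c b); case: (leqP d b) => //= *;
case: (leqP b c); case: (leqP d c) => //= *;
case: (leqP b d); case: (leqP c d) => //= *; lia.
Qed.

Lemma reduce1324' a b c d : a < c -> c < b -> b < d ->
  reduce [:: a; b; c; d] = [:: 1;3;2;4].
Proof.
move=> h1 h2 h3; rewrite /reduce /= !leqnn.
have h4 : a < b by lia. have h5 : a < d by lia. have h6 : c < d by lia.
by rewrite !(leqNgt b a) !(leqNgt c a) !(leqNgt d a) !(leqNgt b c)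
  !(leqNgt d c) !(leqNgt d b) h1 h2 h3 h4 h5 h6 !(ltnW h1) !(ltnW h2)
  !(ltnW h3) !(ltnW h4) !(ltnW h5) !(ltnW h6).
Qed.

Definition c132 (x : seq nat) := exists a b c, subseq [:: a; c; b] x /\ a < b < c.
Definition c2413 (x : seq nat) := exists a b c d,
  subseq [:: b; d; a; c] x /\ [/\ a < b, b < c & c < d].
Definition c3241 (x : seq nat) := exists a b c d,
  subseq [:: c; b; d; a] x /\ [/\ a < b, b < c & c < d].
Definition good x := ~ c132 x /\ ~ c2413 x /\ ~ c3241 x.

Definition tau := [:: 1%N; 3%N; 2%N; 4%N].

Lemma circ_containsP (pi t : seq nat) i : i < size pi -> subseq t (rot i pi) ->
  reduce t = tau -> circ_contains tau pi.
Proof.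
move=> hi /subseqP [m sz ->] hr.
have sz' : size m == size pi by rewrite sz size_rot.
apply/existsP; exists (Ordinal hi); apply/existsP; exists (Tuple sz').
by rewrite /= hr.
Qed.

Lemma circ_char x N : all (fun y => y < N) x ->
  circ_avoids tau (rcons x N) <-> good x.
Proof.
move=> /allP hx; have hpi : forall y, y \in rcons x N -> y <= N.
  by move=> y; rewrite mem_rcons inE => /orP [/eqP -> //| /hx /ltnW].
split.
- move=> /negP hav; split; [|split].
  + move=> [a [b [c [hs /andP [h1 h2]]]]]; apply: hav.
    apply: (@circ_containsP _ [:: a; c; b; N] 0); first by rewrite size_rcons.
      by rewrite rot0 -cats1 (_ : [:: a; c; b; N] = [:: a; c; b] ++ [:: N]) //
        cat_subseq.
    apply: reduce1324' => //; apply: hx; apply: (mem_subseq hs).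
    by rewrite !inE eqxx orbT.
  + move=> [a [b [c [d [hs [h1 h2 h3]]]]]]; apply: hav.
    move: hs; rewrite (_ : [:: b; d; a; c] = [:: b; d] ++ [:: a; c]) //.
    move/subseq_split => [s1 [s2 [hx12 hs1 hs2]]].
    apply: (@circ_containsP _ [:: a; c; b; d] (size s1)).
      by rewrite size_rcons hx12 size_cat; lia.
      rewrite -cats1 hx12 -catA rot_size_cat.
      rewrite (_ : [:: a; c; b; d] = [:: a; c] ++ [:: b; d]) //.
      apply: cat_subseq; first by apply: (subseq_trans hs2); apply: prefix_subseq.
      by [].
    by apply: reduce1324'.
  + move=> [a [b [c [d [hs [h1 h2 h3]]]]]]; apply: hav.
    move: hs; rewrite (_ : [:: c; b; d; a] = [:: c; b; d] ++ [:: a]) //.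
    move/subseq_split => [s1 [s2 [hx12 hs1 hs2]]].
    apply: (@circ_containsP _ [:: a; c; b; d] (size s1)).
      by rewrite size_rcons hx12 size_cat; lia.
      rewrite -cats1 hx12 -catA rot_size_cat.
      rewrite (_ : [:: a; c; b; d] = [:: a] ++ [:: c; b; d]) //.
      apply: cat_subseq; first by apply: (subseq_trans hs2); apply: prefix_subseq.
      by [].
    by apply: reduce1324'.
- move=> [n132 [n2413 n3241]]; apply/negP => /existsP [i /existsP [m /eqP hr]].
  have hs := mask_subseq m (rot i (rcons x N)).
  have [a [b [c [d [ht [h1 h2 h3]]]]]] := @reduce1324 _ hr.
  move: hs; rewrite ht /rot => /subseq_catP [t1 [t2 [e12 s1 s2]]].
  have hsub : subseq (t2 ++ t1) (rcons x N).
    by rewrite -(cat_take_drop i (rcons x N)); apply: cat_subseq.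
  have mem4 : forall y, y \in t2 ++ t1 -> y <= N.
    by move=> y /(mem_subseq hsub) /hpi.
  have ha : a <= N by apply: mem4; rewrite mem_cat orbC -mem_cat -e12 !inE eqxx ?orbT.
  have hb : b <= N by apply: mem4; rewrite mem_cat orbC -mem_cat -e12 !inE eqxx ?orbT.
  have hc : c <= N by apply: mem4; rewrite mem_cat orbC -mem_cat -e12 !inE eqxx ?orbT.
  have hd : d <= N by apply: mem4; rewrite mem_cat orbC -mem_cat -e12 !inE eqxx ?orbT.
  have hrot : t2 ++ t1 = rot (size t1) [:: a; b; c; d] by rewrite e12 rot_size_cat.
  have hsz : size t1 <= 4 by rewrite -[4]/(size [:: a; b; c; d]) e12 size_cat leq_addr.
  have H0 : subseq [:: a; b; c; d] (rcons x N) -> False.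
    move=> /sub_rcons [] hs.
    - apply: n132; exists a, c, b; split; last by lia.
      by apply: (subseq_trans _ hs); rewrite -[[:: a; b; c; d]]/([:: a; b; c] ++ [:: d]) prefix_subseq.
    - move: hs => [u []]; rewrite -[[:: a; b; c; d]]/(rcons [:: a; b; c] d).
      move/rcons_inj => [<- _] hu; apply: n132; exists a, c, b; split => //; lia.
  move: hsub; rewrite hrot; case: (size t1) hsz => [|[|[|[|[|k]]]]] //= _;
  rewrite /rot /=.
  + move/sub_rcons_lt'; rewrite /= => hs; have {}hs := hs ltac:(lia).
    by apply: n3241; exists a, c, b, d.
  + move/sub_rcons_lt'; rewrite /= => hs; have {}hs := hs ltac:(lia).
    by apply: n2413; exists a, c, b, d.
  + move/sub_rcons_lt'; rewrite /= => hs; have {}hs := hs ltac:(lia).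
    apply: n132; exists a, c, b; split; last by lia.
    by apply: (subseq_trans _ hs); apply: (subseq_cons _ d).
Qed.

Lemma good_sub x y : subseq y x -> good x -> good y.
Proof.
move=> hs [n1 [n2 n3]]; split; [|split].
- by move=> [a [b [c [h1 h2]]]]; apply: n1; exists a, b, c; split => //; apply: subseq_trans hs.
- by move=> [a [b [c [d [h1 h2]]]]]; apply: n2; exists a, b, c, d; split => //; apply: subseq_trans hs.
- by move=> [a [b [c [d [h1 h2]]]]]; apply: n3; exists a, b, c, d; split => //; apply: subseq_trans hs.
Qed.

Lemma good_rcons a N : good a -> all (fun y => y < N) a -> good (rcons a N).
Proof.
move=> [n1 [n2 n3]] /allP ha; split; [|split].
- move=> [p [q [r [/sub_rcons [] h1 h2]]]]; first by apply: n1; exists p, q, r.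
  move: h1 => [u []]; rewrite -[[:: p; r; q]]/(rcons [:: p; r] q).
  move/rcons_inj => [<- hq] hu.
  have : r < q by rewrite hq; apply: ha; apply: (mem_subseq hu); rewrite !inE eqxx orbT.
  case: h2 => *; lia.
- move=> [p [q [r [s [/sub_rcons [] h1 h2]]]]]; first by apply: n2; exists p, q, r, s.
  move: h1 => [u []]; rewrite -[[:: q; s; p; r]]/(rcons [:: q; s; p] r).
  move/rcons_inj => [<- hq] hu.
  have : s < r by rewrite hq; apply: ha; apply: (mem_subseq hu); rewrite !inE eqxx !orbT.
  case: h2 => *; lia.
- move=> [p [q [r [s [/sub_rcons [] h1 h2]]]]]; first by apply: n3; exists p, q, r, s.
  move: h1 => [u []]; rewrite -[[:: r; q; s; p]]/(rcons [:: r; q; s] p).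
  move/rcons_inj => [<- hq] hu.
  have : s < p by rewrite hq; apply: ha; apply: (mem_subseq hu); rewrite !inE eqxx !orbT.
  case: h2 => *; lia.
Qed.

Lemma split3 (t al be : seq nat) N : subseq t (al ++ N :: be) ->
  exists t1 t2 t3, [/\ t = t1 ++ t2 ++ t3, subseq t1 al, t2 = [::] \/ t2 = [:: N]
     & subseq t3 be].
Proof.
move/subseq_catP => [t1 [t' [-> h1]]].
rewrite -cat1s => /subseq_catP [t2 [t3 [-> /sub_single h2 h3]]].
by exists t1, t2, t3.
Qed.

Ltac crush := repeat match goal with
 | H : is_true (_ && _) |- _ => case/andP: H => ? ?
 | H : is_true true |- _ => clear H
 end; lia.

Ltac injall := repeat match goal with
 | H : (_ :: _) = (_ :: _) |- _ => injection H; clear H; intros; subst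
 | H : [::] = (_ :: _) |- _ => discriminate H
 | H : (_ :: _) = [::] |- _ => discriminate H
 | H : [::] = _ |- _ => subst
 | H : (_ :: _) = ?t |- _ => is_var t; subst t
 end.

Lemma good_struct al be j N : j < N -> sorted ltn al -> all (fun e => j < e < N) al ->
  all (fun e => e <= j) be -> good be -> good (al ++ N :: be).
Proof.
move=> hjN hso hal hbe [n1 [n2 n3]]; split; [|split].
- move=> [p [q [r [/split3 [t1 [t2 [t3 [e s1 s2 s3]]]] h]]]].
  have hs1 : sorted ltn t1 by apply: subseq_sorted hso; [exact: ltn_trans|].
  have ha1 : all (fun e => j < e < N) t1.
    by apply/allP => y /(mem_subseq s1) y1; move/allP: hal; apply.
  have hb3 : all (fun e => e <= j) t3.
    by apply/allP => y /(mem_subseq s3) y1; move/allP: hbe; apply.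
  clear s1 hso hal hbe n2 n3.
  case: s2 => ?; subst t2; rewrite /= in e;
  (case: t1 e hs1 ha1 => [|x1 [|x2 [|x3 [|x4 t1]]]] /= e hs1 ha1);
  injall; simpl in *; try by crush.
  by apply: n1; exists p, q, r.
- move=> [p [q [r [s [/split3 [t1 [t2 [t3 [e s1 s2 s3]]]] h]]]]].
  have hs1 : sorted ltn t1 by apply: subseq_sorted hso; [exact: ltn_trans|].
  have ha1 : all (fun e => j < e < N) t1.
    by apply/allP => y /(mem_subseq s1) y1; move/allP: hal; apply.
  have hb3 : all (fun e => e <= j) t3.
    by apply/allP => y /(mem_subseq s3) y1; move/allP: hbe; apply.
  clear s1 hso hal hbe n1 n3; case: h => h1 h2 h3.
  case: s2 => ?; subst t2; rewrite /= in e;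
  (case: t1 e hs1 ha1 => [|x1 [|x2 [|x3 [|x4 [|x5 t1]]]]] /= e hs1 ha1);
  injall; simpl in *; try by crush.
  by apply: n2; exists p, q, r, s.
- move=> [p [q [r [s [/split3 [t1 [t2 [t3 [e s1 s2 s3]]]] h]]]]].
  have hs1 : sorted ltn t1 by apply: subseq_sorted hso; [exact: ltn_trans|].
  have ha1 : all (fun e => j < e < N) t1.
    by apply/allP => y /(mem_subseq s1) y1; move/allP: hal; apply.
  have hb3 : all (fun e => e <= j) t3.
    by apply/allP => y /(mem_subseq s3) y1; move/allP: hbe; apply.
  clear s1 hso hal hbe n1 n2; case: h => h1 h2 h3.
  case: s2 => ?; subst t2; rewrite /= in e;
  (case: t1 e hs1 ha1 => [|x1 [|x2 [|x3 [|x4 [|x5 t1]]]]] /= e hs1 ha1);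
  injall; simpl in *; try by crush.
  by apply: n3; exists p, q, r, s.
Qed.

Lemma not_sorted (s : seq nat) : ~~ sorted leq s ->
  exists c b, subseq [:: c; b] s /\ b < c.
Proof.
elim: s => [|x s IH] //=; case: s IH => [|y s] IH //=.
rewrite negb_and; case: (leqP x y) => hxy /=.
- move=> /IH [c [b [h1 h2]]]; exists c, b; split; last by [].
  exact: (subseq_trans h1 (subseq_cons _ _)).
- move=> _; exists x, y; split => //=; rewrite !eqxx /=.
  exact: sub0seq.
Qed.

Lemma sorted_cat_leq (s1 s2 : seq nat) : sorted leq s1 -> sorted leq s2 ->
  (forall u v, u \in s1 -> v \in s2 -> u <= v) -> sorted leq (s1 ++ s2).
Proof.
case: s1 => [|y s1] //= h1 h2 h.
rewrite cat_path h1 /=; case: s2 h2 h => [|z s2] //= h2 h.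
rewrite h2 andbT; apply: h; first exact: mem_last.
by rewrite inE eqxx.
Qed.

Definition Gstep (m : nat) (L : seq (seq (seq nat))) : seq (seq nat) :=
  [seq rcons a m.+1 | a <- last [::] L] ++
  [seq iota j.+1 (m - j) ++ m.+1 :: b | j <- iota 1 m, b <- nth [::] L j].

Fixpoint Gl (m : nat) : seq (seq (seq nat)) :=
  if m is m'.+1 then rcons (Gl m') (Gstep m' (Gl m')) else [:: [:: [::]]].

Definition G m := last [::] (Gl m).

Lemma size_Gl m : size (Gl m) = m.+1.
Proof. by elim: m => //= m IH; rewrite size_rcons IH. Qed.

Lemma nth_Gl m j : j <= m -> nth [::] (Gl m) j = G j.
Proof.
elim: m j => [|m IH] j.
  by rewrite leqn0 => /eqP ->.
rewrite leq_eqVlt => /orP [/eqP -> | hj].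
  by rewrite /G -nth_last size_Gl.
by rewrite /= nth_rcons size_Gl hj IH.
Qed.

Lemma allpairs_eq_t (f : nat -> seq nat -> seq nat) (s : seq nat) t1 t2 :
  {in s, t1 =1 t2} ->
  [seq f x y | x <- s, y <- t1 x] = [seq f x y | x <- s, y <- t2 x].
Proof.
elim: s => //= x s IH h.
have -> : t1 x = t2 x by apply: h; rewrite inE eqxx.
by rewrite IH // => y hy; apply: h; rewrite inE hy orbT.
Qed.

Lemma G_S m : G m.+1 = [seq rcons a m.+1 | a <- G m] ++
  [seq iota j.+1 (m - j) ++ m.+1 :: b | j <- iota 1 m, b <- G j].
Proof.
rewrite {1}/G /= last_rcons /Gstep; congr (_ ++ _).
apply: allpairs_eq_t => j; rewrite mem_iota => /andP [_ hj].
by apply: nth_Gl; lia.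
Qed.

Lemma G0 : G 0 = [:: [::]].
Proof. by []. Qed.

Lemma good_nil : good [::].
Proof.
split; [|split].
- by move=> [a [b [c [h _]]]].
- by move=> [a [b [c [d [h _]]]]].
- by move=> [a [b [c [d [h _]]]]].
Qed.

Lemma iotaS1 m : iota 1 m.+1 = rcons (iota 1 m) m.+1.
Proof.
suff h : forall k, iota k m.+1 = rcons (iota k m) (k + m) by rewrite h add1n.
elim: m => [|m IH] k; first by rewrite /= addn0.
rewrite -[iota k m.+2]/(k :: iota k.+1 m.+1) IH.
by rewrite -[iota k m.+1]/(k :: iota k.+1 m) /= addSnnS.
Qed.

Lemma Gchar m x : x \in G m <-> perm_eq x (iota 1 m) /\ good x.
Proof.
elim/ltn_ind: m x => m IH x.
case: m IH => [|m] IH.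
  rewrite G0 inE; split.
    by move/eqP => ->; split => //; exact: good_nil.
  move=> [hp _]; apply/eqP; have := perm_size hp; rewrite size_iota.
  by case: x {hp}.
rewrite G_S mem_cat; split.
- case/orP.
  + move/mapP => [a ha ->]; have [hp hg] := (IH m (ltnSn m) a).1 ha.
    split; first by rewrite iotaS1 -!cats1 perm_cat2r.
    apply: good_rcons hg _; apply/allP => y; rewrite (perm_mem hp) mem_iota; lia.
  + move/allpairsPdep => [j [b [hj hb ->]]]; rewrite mem_iota in hj.
    have [hp hg] := (IH j ltac:(lia) b).1 hb.
    split.
    * have e : iota 1 m.+1 = iota 1 j ++ iota j.+1 (m - j) ++ [:: m.+1].
        have hjm : j <= m by lia.
        rewrite iotaS1 -cats1 catA; congr (_ ++ _).
        by rewrite -{1}(subnKC hjm) iotaD add1n.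
      rewrite e; apply/permP => p; rewrite !count_cat /=.
      rewrite (permP hp).
      by move: (count p _) (count p _) (nat_of_bool (p m.+1)) => A B C; lia.
    * apply: (@good_struct _ _ j) => //; first by lia.
      - exact: iota_ltn_sorted.
      - by apply/allP => y; rewrite mem_iota; lia.
      - by apply/allP => y; rewrite (perm_mem hp) mem_iota; lia.
- move=> [hp hg].
  have hu : uniq x by rewrite (perm_uniq hp) iota_uniq.
  have hmem : forall y, y \in x -> 1 <= y <= m.+1.
    by move=> y; rewrite (perm_mem hp) mem_iota; lia.
  have hN : m.+1 \in x by rewrite (perm_mem hp) mem_iota; lia.
  case/splitPr: hN hp hg hu hmem => al be hp hg hu hmem.
  move: hu; rewrite cat_uniq => /and3P [_ hdis /andP [hNbe _]].
  have hdis' : forall y, y \in al -> y \in m.+1 :: be -> False.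
    by move=> y h1 h2; move/hasP: hdis; apply; exists y.
  have hNal : m.+1 \notin al by apply/negP => h; apply: (hdis' _ h); rewrite mem_head.
  have hlt : forall u v, u \in al -> v \in be -> v < u.
    move=> u v hu' hv; case: (leqP u v) => // huv; exfalso.
    have huv' : u != v by apply/eqP => e; subst; apply: (hdis' _ hu'); rewrite inE hv orbT.
    have hvN : v != m.+1 by apply/eqP => e; subst; rewrite hv in hNbe.
    have := hmem v; rewrite mem_cat inE hv !orbT => /(_ isT) hv2.
    apply: hg.1; exists u, v, m.+1; split; last by lia.
    rewrite -[[:: u; m.+1; v]]/([:: u] ++ [:: m.+1; v]); apply: cat_subseq.
      by rewrite sub1seq.
    by rewrite /= eqxx sub1seq.
  have [ebe|hbe] := eqVneq be [::].
    subst be; apply/orP; left; apply/mapP; exists al; last by rewrite cats1.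
    apply: (IH m (ltnSn m) al).2; split.
      by move: hp; rewrite iotaS1 -cats1 perm_cat2r.
    by apply: good_sub hg; apply: prefix_subseq.
  have [v hv] : exists v, v \in be by case: be hbe {hp hg hmem hNbe hdis hdis' hlt} => [//|v be' _]; exists v; rewrite mem_head.
  have hsal : sorted leq al.
    apply/negPn/negP => /not_sorted [c [b [hcb hbc]]].
    have hc : c \in al by apply: (mem_subseq hcb); rewrite mem_head.
    have hb : b \in al by apply: (mem_subseq hcb); rewrite !inE eqxx orbT.
    have hcN : c != m.+1 by apply/eqP => e; subst; rewrite hc in hNal.
    have := hmem c; rewrite mem_cat hc => /(_ isT) hc2.
    have := hlt _ _ hb hv => hvb.
    apply: hg.2.2; exists v, b, c, m.+1; split; last by split => //; lia.
    rewrite -[[:: c; b; m.+1; v]]/([:: c; b] ++ [:: m.+1; v]); apply: cat_subseq => //.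
    by rewrite /= eqxx sub1seq.
  have hpba : perm_eq (be ++ al) (iota 1 m).
    move: hp; rewrite iotaS1 -cats1 => hp; apply/permP => p.
    have := permP hp p; rewrite !count_cat /=.
    by move: (count p al) (count p be) (count p (iota 1 m)) (nat_of_bool (p m.+1)) => A B C D; lia.
  set sb := sort leq be.
  have hsorted : sorted leq (sb ++ al).
    apply: sorted_cat_leq => //; first exact: (sort_sorted leq_total).
    by move=> u w; rewrite mem_sort => hu' hw; apply: ltnW; apply: hlt.
  have heq : sb ++ al = iota 1 m.
    apply: (sorted_eq leq_trans anti_leq) hsorted (iota_sorted 1 m) _.
    by apply: perm_trans hpba; rewrite perm_cat2r; apply/permPl; exact: perm_sort.
  have hj : size be <= m by have := perm_size hpba; rewrite size_cat size_iota; lia.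
  have hal : al = iota (size be).+1 (m - size be).
    by have := congr1 (drop (size be)) heq; rewrite drop_size_cat ?size_sort // drop_iota add1n.
  have hsb : sb = iota 1 (size be).
    have := congr1 (take (size be)) heq; rewrite take_size_cat ?size_sort // take_iota.
    by move=> ->; congr iota; lia.
  apply/orP; right; apply/allpairsPdep; exists (size be), be; split.
  + have hb0 : 0 < size be by rewrite lt0n size_eq0.
    rewrite mem_iota; lia.
  + apply: (IH (size be) ltac:(lia) be).2; split.
      by rewrite -hsb perm_sym perm_sort.
    apply: good_sub hg; apply: (subseq_trans (subseq_cons be m.+1)); exact: suffix_subseq.
  + by rewrite -hal.
Qed.

Lemma cat_cons_inj (a1 b1 a2 b2 : seq nat) y : a1 ++ y :: b1 = a2 ++ y :: b2 ->
  y \notin a1 -> y \notin a2 -> a1 = a2 /\ b1 = b2.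
Proof.
move=> e h1 h2.
have := congr1 (index y) e; rewrite !index_cat (negbTE h1) (negbTE h2) /= eqxx !addn0 => hs.
by move/eqP: e; rewrite eqseq_cat // => /andP [/eqP -> /eqP [->]].
Qed.

Lemma G_uniq m : uniq (G m).
Proof.
elim/ltn_ind: m => m IH; case: m IH => [|m] IH //.
rewrite G_S cat_uniq; apply/and3P; split.
- by rewrite (map_inj_uniq (@rcons_injl _ m.+1)); apply: IH.
- apply/hasPn => y /allpairsPdep [j [b [hj hb ->]]].
  apply/negP => /mapP [a ha e]; rewrite mem_iota in hj.
  have [hp _] := (Gchar j b).1 hb.
  have := congr1 (last 0) e; rewrite last_rcons last_cat /=.
  case: b hp {hb e} => [|z b] hp.
    by have := perm_size hp; rewrite size_iota /=; lia.
  have := mem_last z b; rewrite (perm_mem hp) mem_iota => hl e.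
  by rewrite /= in e; rewrite e in hl; lia.
- apply: allpairs_uniq_dep; first exact: iota_uniq.
    by move=> j; rewrite mem_iota => hj; apply: IH; lia.
  move=> [j1 b1] [j2 b2] /allpairsPdep [j1' [b1' [hj1 _ e1]]]
    /allpairsPdep [j2' [b2' [hj2 _ e2]]] /= e.
  have := congr1 tag e1; have := congr1 tag e2 => /= ej2 ej1.
  subst j1' j2'; rewrite !mem_iota in hj1 hj2.
  have [ea eb] := @cat_cons_inj _ _ _ _ _ e
    ltac:(by apply/negP; rewrite mem_iota; lia) ltac:(by apply/negP; rewrite mem_iota; lia).
  have := congr1 size ea; rewrite !size_iota => es.
  have ej : j1 = j2 by lia.
  by subst j2 b2.
Qed.

Lemma size_G m : size (G m.+1) = fib (2 * m).+1 /\
  sumn [seq size (G j) | j <- iota 1 m] = fib (2 * m).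
Proof.
elim: m => [|m [IH1 IH2]]; first by [].
have e2 : 2 * m.+1 = (2 * m).+2 by lia.
have hs : sumn [seq size (G j) | j <- iota 1 m.+1] = fib (2 * m.+1).
  by rewrite e2 iotaS1 -cats1 map_cat sumn_cat IH2 /= IH1 addn0 addnC.
split => //.
rewrite G_S size_cat size_map size_allpairs_dep hs IH1 e2 /=.
by rewrite addnC.
Qed.
Local Open Scope ring_scope.

Lemma count_main m :
  size [seq pi <- circ_perms m.+1 | circ_avoids tau pi] = size (G m).
Proof.
rewrite -[RHS](size_map (rcons^~ m.+1)); apply: perm_size; apply: uniq_perm.
- by apply: filter_uniq; apply: filter_uniq; apply: permutations_uniq.
- by rewrite (map_inj_uniq (@rcons_injl _ m.+1)) G_uniq.
move=> pi; rewrite !mem_filter mem_permutations; apply/idP/idP.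
- move=> /and3P [hav hl hp]; case/lastP: pi hav hl hp => [|x y] hav hl hp.
    by have := perm_size hp; rewrite size_iota.
  rewrite last_rcons in hl; move/eqP: hl => hl; subst y.
  have {hp} hp : perm_eq x (iota 1 m) by move: hp; rewrite iotaS1 -!cats1 perm_cat2r.
  have hall : all (fun y => (y < m.+1)%N) x.
    by apply/allP => y; rewrite (perm_mem hp) mem_iota; lia.
  apply/mapP; exists x => //; apply/Gchar; split => //.
  exact: (@circ_char x m.+1 hall).1 hav.
- move/mapP => [x hx ->]; have [hp hg] := (Gchar m x).1 hx.
  have hall : all (fun y => (y < m.+1)%N) x.
    by apply/allP => y; rewrite (perm_mem hp) mem_iota; lia.
  rewrite last_rcons eqxx iotaS1 -!cats1 perm_cat2r hp andbT /= cats1.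
  by rewrite andbT; exact: (@circ_char x m.+1 hall).2 hg.
Qed.

Theorem theorem1 (n : nat) : (0 < n)%N ->
  (size [seq pi <- circ_perms n | circ_avoids [:: 1%N; 3%N; 2%N; 4%N] pi])%:Z
     = fibz (2 * n%:Z - 3).
Proof.
case: n => [//|m] _.
have -> := count_main m.
case: m => [|k]; first by [].
have [-> _] := size_G k.
have -> : 2 * (k.+2)%:Z - 3 = Posz (2 * k).+1 by lia.
by [].
Qed.
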